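(* For all $n\ge2$, $R_{n+1}\ge R_n$.
   Context: Scheduling on two machines with $n$ tasks. A processing-time matrix is $T\in\mathbb{R}_{++}^{2\times n}$; an allocation is $X\in\{0,1\}^{2\times n}$ with $X_{1j}+X_{2j}=1$; makespan $M(X,T)=\max_{i\in\{1,2\}}\sum_jX_{ij}T_{ij}$; $M^*(T)=\min_XM(X,T)$. $\mathcal{P}_n$ is the set of Borel probability measures on $\mathbb{R}^n$ supported in $\mathbb{R}_{++}^n$. For $\mathbb{P}\in\mathcal{P}_n$, algorithm $\mathcal{A}^{\mathbb{P}}$ draws $\mathbf{z}\sim\mathbb{P}$ and sends task $j$ to machine 1 iff $T_{1j}/T_{2j}<z_j$ (else to machine 2); $M(\mathbb{P},T)$ is its expected makespan, $R_n(\mathbb{P})=\sup_{T\in\mathbb{R}_{++}^{2\times n}}M(\mathbb{P},T)/M^*(T)\in[1,\infty]$, and $R_n=\inf_{\mathbb{P}\in\mathcal{P}_n}R_n(\mathbb{P})$. *)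

(* Defs.v *)
From HB Require Import structures.
From mathcomp Require Import all_boot all_order all_algebra.
From mathcomp Require Import all_classical all_reals all_analysis.
Set Implicit Arguments. Unset Strict Implicit. Unset Printing Implicit Defensive.
Import Order.TTheory GRing.Theory Num.Theory.
Local Open Scope classical_set_scope.
Local Open Scope ring_scope.

Section Scheduling.
Variable R : realType.

Definition mach1 : 'I_2 := ord0.
Definition mach2 : 'I_2 := @Ordinal 2 1 isT.

Definition pos_times n (T : 'M[R]_(2, n)) : Prop := forall i j, 0 < T i j.

Definition allocation n (X : 'M[nat]_(2, n)) : Prop :=
  (forall i j, X i j = 0%N \/ X i j = 1%N) /\
  (forall j, (X mach1 j + X mach2 j)%N = 1%N).

Definition load n (X : 'M[nat]_(2, n)) (T : 'M[R]_(2, n)) (i : 'I_2) : R :=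
  \sum_(j < n) (X i j)%:R * T i j.
Definition makespan n (X : 'M[nat]_(2, n)) (T : 'M[R]_(2, n)) : R :=
  Num.max (load X T mach1) (load X T mach2).

Definition opt_makespan n (T : 'M[R]_(2, n)) : R :=
  inf [set makespan X T | X in [set X | allocation X]].

Definition threshold_alloc n (z : n.-tuple R) (T : 'M[R]_(2, n)) : 'M[nat]_(2, n) :=
  \matrix_(i < 2, j < n)
    (if i == mach1 then nat_of_bool (T mach1 j / T mach2 j < tnth z j)
     else nat_of_bool (~~ (T mach1 j / T mach2 j < tnth z j))).

Definition supported_pos n (P : probability (n.-tuple R) R) : Prop :=
  P [set z : n.-tuple R | forall j, 0 < tnth z j] = 1%E.

Definition exp_makespan n (P : probability (n.-tuple R) R) (T : 'M[R]_(2, n)) : \bar R :=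
  (\int[P]_z (makespan (threshold_alloc z T) T)%:E)%E.

Definition ratio n (P : probability (n.-tuple R) R) : \bar R :=
  ereal_sup [set (exp_makespan P T * ((opt_makespan T)^-1)%:E)%E
            | T in [set T | pos_times T]].

Definition Rn (n : nat) : \bar R :=
  ereal_inf [set ratio P | P in [set P : probability (n.-tuple R) R | supported_pos P]].

End Scheduling.

(* Main.v *)
Require Import Defs.
From HB Require Import structures.
From mathcomp Require Import all_boot all_order all_algebra.
From mathcomp Require Import all_classical all_reals all_analysis.
From mathcomp Require Import measurable_realfun ring lra.
Import Order.TTheory GRing.Theory Num.Theory.
Set Implicit Arguments. Unset Strict Implicit. Unset Printing Implicit Defensive.
Section S.
Local Open Scope classical_set_scope.
Local Open Scope ring_scope.
Variable R : realType.

Lemma meas_ms n (T : 'M[R]_(2, n)) :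
  measurable_fun setT (fun z : n.-tuple R => makespan (threshold_alloc z T) T).
Proof.
rewrite /makespan.
apply: (measurable_maxr (f := fun z => load (threshold_alloc z T) T mach1)
   (g := fun z => load (threshold_alloc z T) T mach2)).
- rewrite /load; apply: measurable_sum => j.
  under eq_fun do rewrite mxE /=.
  apply: measurable_funM => //.
  have -> : (fun x : n.-tuple R => (nat_of_bool (T mach1 j / T mach2 j < tnth x j))%:R : R)
     = fun x => if (T mach1 j / T mach2 j < tnth x j) then 1 else 0.
    by apply: funext => x; case: ifP.
  apply: measurable_fun_ifT => //.
  apply: measurable_fun_ltr => //; exact: measurable_tnth.
- rewrite /load; apply: measurable_sum => j.
  under eq_fun do rewrite mxE /=.
  apply: measurable_funM => //.
  have -> : (fun x : n.-tuple R => (nat_of_bool (~~(T mach1 j / T mach2 j < tnth x j)))%:R : R)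
     = fun x => if (T mach1 j / T mach2 j < tnth x j) then 0 else 1.
    by apply: funext => x; case: ifP.
  apply: measurable_fun_ifT => //.
  apply: measurable_fun_ltr => //; exact: measurable_tnth.
Qed.

Definition beh n (z : (n.+1).-tuple R) : n.-tuple R := [tuple of behead z].
HB.instance Definition _ n := isMeasurableFun.Build _ _ _ _ (@beh n) (@measurable_behead _ _ n).


Lemma tnth_beh n (z : (n.+1).-tuple R) k : tnth (beh z) k = tnth z (lift ord0 k).
Proof.
rewrite /beh (tnth_nth 0) (tnth_nth 0) /=.
by case: z => [[|a s] /= Hs].
Qed.

Definition ext n (T : 'M[R]_(2, n)) (e : R) : 'M[R]_(2, n.+1) :=
  \matrix_(i, j) match unlift ord0 j with Some k => T i k | None => e end.

Lemma ext0 n (T : 'M[R]_(2, n)) e i : ext T e i ord0 = e.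
Proof. by rewrite mxE unlift_none. Qed.

Lemma extS n (T : 'M[R]_(2, n)) e i k : ext T e i (lift ord0 k) = T i k.
Proof. by rewrite mxE liftK. Qed.

Lemma pos_ext n (T : 'M[R]_(2, n)) e : 0 < e -> pos_times T -> pos_times (ext T e).
Proof.
move=> e0 PT i j; rewrite mxE; case: unlift => //.
Qed.

Lemma load_ge0 n (X : 'M[nat]_(2, n)) (T : 'M[R]_(2, n)) i : pos_times T -> 0 <= load X T i.
Proof.
move=> PT; rewrite /load; apply: sumr_ge0 => j _.
by apply: mulr_ge0 => //; apply: ltW.
Qed.

Lemma makespan_ge0 n (X : 'M[nat]_(2, n)) (T : 'M[R]_(2, n)) : pos_times T -> 0 <= makespan X T.
Proof. by move=> PT; rewrite /makespan le_max load_ge0. Qed.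

Lemma ms_ext n (T : 'M[R]_(2, n)) e z : pos_times T -> 0 < e ->
  makespan (threshold_alloc (beh z) T) T <=
  makespan (threshold_alloc z (ext T e)) (ext T e).
Proof.
move=> PT e0.
have H i : load (threshold_alloc (beh z) T) T i <=
    load (threshold_alloc z (ext T e)) (ext T e) i.
  rewrite /load big_ord_recl /=.
  rewrite -[X in X <= _]add0r; apply: lerD.
    by apply: mulr_ge0 => //; rewrite ext0 ltW.
  rewrite le_eqVlt; apply/orP; left; apply/eqP.
  apply/eqP; rewrite eq_sym; apply/eqP; apply: eq_bigr => k _.
  by rewrite extS !mxE !liftK tnth_beh.
rewrite /makespan; apply: le_max2; apply: H.
Qed.

Lemma opt_lb n (T : 'M[R]_(2, n)) X : pos_times T -> allocation X -> opt_makespan T <= makespan X T.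
Proof.
move=> PT aX; apply: ge_inf; last by exists X.
by exists 0 => _ [Y _ <-]; exact: makespan_ge0.
Qed.

Definition X0 n : 'M[nat]_(2, n) := \matrix_(i, j) nat_of_bool (i == mach1).

Lemma alloc_X0 n : allocation (X0 n).
Proof.
split; first by move=> i j; rewrite mxE; case: (i == mach1); auto.
by move=> j; rewrite !mxE.
Qed.

Lemma term_le_load n (X : 'M[nat]_(2, n)) (T : 'M[R]_(2, n)) i j :
  pos_times T -> X i j = 1%N -> T i j <= load X T i.
Proof.
move=> PT Xij; rewrite /load (bigD1 j) //= Xij mul1r lerDl.
by apply: sumr_ge0 => k _; apply: mulr_ge0 => //; apply: ltW.
Qed.

Lemma opt_pos n (T : 'M[R]_(2, n)) : (0 < n)%N -> pos_times T -> 0 < opt_makespan T.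
Proof.
move=> n0 PT; pose j0 := Ordinal n0.
apply: (@lt_le_trans _ _ (Num.min (T mach1 j0) (T mach2 j0))).
  by rewrite lt_min !PT.
apply: lb_le_inf; first by exists (makespan (X0 n) T), (X0 n) => //; exact: alloc_X0.
move=> _ [X [aX1 aX2] <-]; rewrite /makespan.
have := aX2 j0; case: (aX1 mach1 j0) => h1.
  rewrite h1 add0n => h; rewrite le_max; apply/orP; right.
  by rewrite ge_min (term_le_load PT h) orbT.
move=> _; rewrite le_max; apply/orP; left.
by rewrite ge_min (term_le_load PT h1).
Qed.

Definition Xext n (X : 'M[nat]_(2, n)) : 'M[nat]_(2, n.+1) :=
  \matrix_(i, j) match unlift ord0 j with Some k => X i k | None => nat_of_bool (i == mach1) end.

Lemma alloc_Xext n (X : 'M[nat]_(2, n)) : allocation X -> allocation (Xext X).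
Proof.
move=> [a1 a2]; split.
  move=> i j; rewrite mxE; case: unlift => [k|]; first exact: a1.
  by case: (i == mach1); auto.
by move=> j; rewrite !mxE; case: unlift => [k|] //; exact: a2.
Qed.

Lemma opt_ext n (T : 'M[R]_(2, n)) e : pos_times T -> 0 < e ->
  opt_makespan (ext T e) <= opt_makespan T + e.
Proof.
move=> PT e0; rewrite -lerBlDr.
apply: lb_le_inf; first by exists (makespan (X0 n) T), (X0 n) => //; exact: alloc_X0.
move=> _ [X aX <-]; rewrite lerBlDr.
apply: (le_trans (opt_lb (pos_ext e0 PT) (alloc_Xext aX))).
have H i : load (Xext X) (ext T e) i <= load X T i + e.
  rewrite /load big_ord_recl /= addrC; apply: lerD.
    by apply: ler_sum => k _; rewrite !mxE !liftK.
  rewrite !mxE unlift_none; case: (i == mach1) => /=; lra.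
rewrite /makespan ge_max; apply/andP; split; apply: (le_trans (H _)); rewrite lerD2r le_max lexx ?orbT //.
Qed.

Lemma measurable_pos n : measurable [set z : n.-tuple R | forall j, 0 < tnth z j].
Proof.
have -> : [set z : n.-tuple R | forall j, 0 < tnth z j] =
   \bigcap_(j in [set: 'I_n]) ((fun z : n.-tuple R => tnth z j) @^-1` `]0, +oo[%classic).
  apply/seteqP; split => z /= h.
    by move=> j _ /=; rewrite in_itv /= andbT; apply: h.
  by move=> j; have := h j I; rewrite /= in_itv /= andbT.
apply: fin_bigcap_measurable; first exact: finite_finset.
move=> j _; have := measurable_tnth j measurableT (measurable_itv (R:=R) `]0, +oo[).
by rewrite setTI.
Qed.

Lemma supp_dist n (P : probability ((n.+1).-tuple R) R) :
  supported_pos P -> supported_pos (distribution P (@beh n)).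
Proof.
move=> sP; rewrite /supported_pos; apply/eqP; rewrite eq_le; apply/andP; split.
  rewrite -(@probability_setT _ _ _ (distribution P (@beh n))); apply: le_measure; rewrite ?inE //; exact: measurable_pos.
rewrite -sP /distribution /pushforward; apply: le_measure; rewrite ?inE.
- exact: measurable_pos.
- have := @measurable_behead _ R n measurableT _ (@measurable_pos n).
  by rewrite setTI.
- by move=> z /= h j; rewrite tnth_beh.
Qed.

Local Open Scope ereal_scope.

Lemma exp_ge0 n (P : probability (n.-tuple R) R) (T : 'M[R]_(2, n)) :
  pos_times T -> 0 <= exp_makespan P T.
Proof.
move=> PT; apply: integral_ge0 => z _; rewrite lee_fin; exact: makespan_ge0.
Qed.

Lemma key n (P : probability ((n.+1).-tuple R) R) (T : 'M[R]_(2, n)) e :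
  pos_times T -> (0 < e)%R -> (0 < n)%N ->
  exp_makespan (distribution P (@beh n)) T * ((opt_makespan T + e)^-1)%:E <= Defs.ratio P.
Proof.
move=> PT e0 n0.
have PT' := pos_ext e0 PT.
have o0 := opt_pos n0 PT.
have o'0 := opt_pos (ltn0Sn n) PT'.
apply: le_trans (ereal_sup_ubound _); last by exists (ext T e).
apply: lee_pmul.
- exact: exp_ge0.
- rewrite lee_fin invr_ge0; apply: ltW; exact: addr_gt0.
- rewrite /exp_makespan ge0_integral_distribution.
  + apply: ge0_le_integral => //.
    * by move=> z _; rewrite lee_fin makespan_ge0.
    * apply: measurableT_comp => //; apply/measurable_EFinP; exact: meas_ms.
    * apply/measurable_EFinP; exact: meas_ms.
    * by move=> z _ /=; rewrite lee_fin; apply: ms_ext.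
  + apply/measurable_EFinP; exact: meas_ms.
  + by move=> z; rewrite lee_fin makespan_ge0.
- rewrite lee_fin lef_pV2 ?posrE ?addr_gt0 //; exact: opt_ext.
Qed.

Lemma ratio_le n (P : probability ((n.+1).-tuple R) R) : (0 < n)%N ->
  Defs.ratio (distribution P (@beh n)) <= Defs.ratio P.
Proof.
move=> n0; apply: ge_ereal_sup => _ [T PT <-].
have o0 := opt_pos n0 PT.
have E0 := exp_ge0 (distribution P (@beh n)) PT.
have K := fun e (he : (0 < e)%R) => @key n P T e PT he n0.
move: E0 K; set E := exp_makespan _ T; set r := Defs.ratio P.
set o := opt_makespan T.
case: E => [x| |] //; case: r => [y| |] // ; rewrite ?leey //.
- move=> x0 K; rewrite !lee_fin in x0 *.
  have y0 : (0 <= y)%R.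
    have := K 1%R ltr01; rewrite -EFinM lee_fin; apply: le_trans.
    by apply: mulr_ge0 => //; rewrite invr_ge0 ltW // addr_gt0.
  rewrite -(@ler_pM2r _ o) // mulfVK ?gt_eqF //.
  apply/ler_addgt0Pr => d d0.
  have e0 : (0 < d / (y + 1))%R by apply: divr_gt0 => //; lra.
  have := K _ e0; rewrite -EFinM lee_fin.
  have oe0 : (0 < o + d / (y + 1))%R by apply: addr_gt0.
  rewrite -(@ler_pM2r _ (o + d / (y + 1))) // mulfVK ?gt_eqF // => h.
  apply: (le_trans h); rewrite mulrDr lerD2l.
  rewrite mulrA ler_pdivrMr; last lra.
  nra.
- move=> x0 K; have := K 1%R ltr01.
  by rewrite -EFinM leeNy_eq.
- move=> _ K; have := K 1%R ltr01.
  by rewrite gt0_mulye ?lte_fin ?invr_gt0 ?addr_gt0 // leye_eq.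
- move=> _ K; have := K 1%R ltr01.
  by rewrite gt0_mulye ?lte_fin ?invr_gt0 ?addr_gt0.
Qed.
End S.

Local Open Scope ring_scope.

Theorem corollary4 (R : realType) (n : nat) (hn : (2 <= n)%N) :
  (Rn R n <= Rn R n.+1)%E.
Proof.
have n0 : (0 < n)%N by apply: leq_trans hn.
rewrite /Rn; apply: le_ereal_inf_tmp => _ [P sP <-].
apply: le_trans (ratio_le P n0).
apply: ereal_inf_lbound; exists (distribution P (@beh R n)) => //.
exact: supp_dist.
Qed.
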